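(* Suppose $z=|\Sigma|\ge3$. If $\pi\in\mathrm{SR}^z$, then $\mathrm{TD}(\pi,\mathrm{R}\Pi^z)\le3$.
   Context: Fix a countably infinite set $X$ of variables and an alphabet $\Sigma$ disjoint from $X$. A pattern is a nonempty finite string over $X\cup\Sigma$; $\Pi^z$ is the class of all patterns over an alphabet of size $z$. A substitution is a morphism $h:(X\cup\Sigma)^*\to\Sigma^*$ fixing every letter; $L(\pi)$, the erasing pattern language, is the set of all $h(\pi)$. A pattern is regular if each variable occurs at most once; $\mathrm{R}\Pi^z$ is the class of regular patterns in $\Pi^z$. A pattern is simple block-regular if it has the shape $X_1a_1X_2\cdots a_{n-1}X_n$ with $X_i\in X^+$, $a_i\in\Sigma$, each $X_i$ containing a variable occurring in no other block; $\mathrm{SR}^z$ is the class of simple block-regular patterns in $\Pi^z$. A labelled example is $(w,\pm)$ with $w\in\Sigma^*$; a teaching set for $\pi$ w.r.t. a class $\Pi$ is a set $T$ of labelled examples consistent with $\pi$ ($w\in L(\pi)$ iff the label is $+$) such that every $\tau\in\Pi$ consistent with $T$ has $L(\tau)=L(\pi)$; $\mathrm{TD}(\pi,\Pi)$ is the minimum size of such a set. *)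

(* Defs.v *)
From HB Require Import structures.
From mathcomp Require Import all_boot.
Set Implicit Arguments. Unset Strict Implicit. Unset Printing Implicit Defensive.

(* Symbols of a pattern: variables from the countably infinite set X := nat,
   or letters from the finite alphabet Sigma. *)
Inductive sym (Sigma : Type) := Var of nat | Let of Sigma.
Arguments Var {Sigma}.
Arguments Let {Sigma}.

Definition sym_eqb (Sigma : eqType) (a b : sym Sigma) : bool :=
  match a, b with
  | Var x, Var y => x == y
  | Let c, Let d => c == d
  | _, _ => false
  end.

Lemma sym_eqP (Sigma : eqType) : Equality.axiom (@sym_eqb Sigma).
Proof.
case=> [x|c] [y|d] /=.
- by apply: (iffP eqP) => [->|[]].
- by constructor.
- by constructor.
- by apply: (iffP eqP) => [->|[]].
Qed.

HB.instance Definition _ (Sigma : eqType) := hasDecEq.Build (sym Sigma) (@sym_eqP Sigma).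

Definition pattern (Sigma : Type) := seq (sym Sigma).

Definition subst (Sigma : Type) (h : nat -> seq Sigma) (p : pattern Sigma) : seq Sigma :=
  flatten (map (fun s => match s with Var x => h x | Let a => [:: a] end) p).

(* Erasing pattern language membership. *)
Definition inL (Sigma : Type) (p : pattern Sigma) (w : seq Sigma) : Prop :=
  exists h : nat -> seq Sigma, subst h p = w.

Definition is_pattern (Sigma : Type) (p : pattern Sigma) : Prop := p <> [::].

Definition regular (Sigma : eqType) (p : pattern Sigma) : Prop :=
  forall x : nat, count (pred1 (Var x)) p <= 1.

Definition reg_class (Sigma : eqType) (p : pattern Sigma) : Prop :=
  is_pattern p /\ regular p.

(* Build X_1 a_1 X_2 ... a_{n-1} X_n from X_1 and the list [(a_1,X_2);...]. *)
Definition block_pattern (Sigma : Type) (X1 : seq nat) (rest : seq (Sigma * seq nat))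
  : pattern Sigma :=
  map Var X1 ++ flatten (map (fun aX => Let aX.1 :: map Var aX.2) rest).

Definition simple_block_regular (Sigma : eqType) (p : pattern Sigma) : Prop :=
  exists (X1 : seq nat) (rest : seq (Sigma * seq nat)),
    let B := X1 :: map snd rest in
    p = block_pattern X1 rest /\
    (forall i, i < size B -> nth [::] B i != [::]) /\
    (forall i, i < size B ->
       exists x, x \in nth [::] B i /\
         (forall j, j < size B -> j != i -> x \notin nth [::] B j)).

Definition same_lang (Sigma : Type) (p q : pattern Sigma) : Prop :=
  forall w, inL p w <-> inL q w.

(* Labelled examples: (w, true) = positive, (w, false) = negative. *)
Definition consistent (Sigma : eqType) (p : pattern Sigma) (T : seq (seq Sigma * bool)) : Prop :=
  forall e, e \in T -> (inL p e.1 <-> e.2 = true).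

Definition teaching_set (Sigma : eqType) (cls : pattern Sigma -> Prop)
  (p : pattern Sigma) (T : seq (seq Sigma * bool)) : Prop :=
  consistent p T /\ forall q, cls q -> consistent q T -> same_lang q p.

Definition TD_le (Sigma : eqType) (cls : pattern Sigma -> Prop) (p : pattern Sigma) (k : nat) : Prop :=
  exists T, size T <= k /\ teaching_set cls p T.

(* Main.v *)
Require Import Defs.
From mathcomp Require Import all_boot zify.
Set Implicit Arguments. Unset Strict Implicit. Unset Printing Implicit Defensive.

Section Gen.
Variable S : eqType.
Implicit Types (q : pattern S) (h : nat -> seq S) (w : seq S).

Definition img h (s : sym S) : seq S := match s with Var x => h x | Let a => [:: a] end.

Lemma subst_nil h : subst h [::] = [::]. Proof. by []. Qed.
Lemma subst_cons h s q : subst h (s :: q) = img h s ++ subst h q.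
Proof. by []. Qed.
Lemma subst_cat h q1 q2 : subst h (q1 ++ q2) = subst h q1 ++ subst h q2.
Proof. by rewrite /subst map_cat flatten_cat. Qed.
Lemma subst_rcons h q s : subst h (rcons q s) = subst h q ++ img h s.
Proof. by rewrite -cats1 subst_cat /subst /= cats0. Qed.

Definition upd h x v := fun y => if y == x then v else h y.

Lemma subst_eq_on h h' q : (forall x, Var x \in q -> h x = h' x) -> subst h q = subst h' q.
Proof.
elim: q => [//|s q IH] H; rewrite !subst_cons IH; last first.
  by move=> x Hx; apply: H; rewrite inE Hx orbT.
by case: s H => [x|a] H //=; rewrite H // inE eqxx.
Qed.

Lemma subst_upd_notin h x v q : Var x \notin q -> subst (upd h x v) q = subst h q.
Proof.
move=> Hn; apply: subst_eq_on => y Hy; rewrite /upd; case: eqP => // E.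
by subst y; rewrite Hy in Hn.
Qed.

Lemma regular_cons s q : regular (s :: q) -> regular q.
Proof. by move=> H x; have := H x; rewrite /= ; case: (_ == _) => //= /ltnW. Qed.

Lemma regular_catr q1 q2 : regular (q1 ++ q2) -> regular q2.
Proof. by move=> H x; have := H x; rewrite count_cat; lia. Qed.

Lemma regular_catl q1 q2 : regular (q1 ++ q2) -> regular q1.
Proof. by move=> H x; have := H x; rewrite count_cat; lia. Qed.

Lemma count_pos (T : eqType) (x : T) s : x \in s -> 0 < count (pred1 x) s.
Proof. move=> H. rewrite -has_count. apply/hasP. exists x => //=. Qed.

Lemma regular_disj q1 q2 x : regular (q1 ++ q2) -> Var x \in q1 -> Var x \notin q2.
Proof.
move=> H H1; apply/negP => H2; have := H x; rewrite count_cat.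
have := count_pos H1; have := count_pos H2. lia.
Qed.

Lemma regular_head x q : regular (Var x :: q) -> Var x \notin q.
Proof. by move=> H; apply: (@regular_disj [:: Var x]) => //; rewrite inE. Qed.

Definition lets q : seq S := flatten (map (fun s => match s with Var _ => [::] | Let a => [:: a] end) q).

Lemma lets_cons_var x q : lets (Var x :: q) = lets q. Proof. by []. Qed.
Lemma lets_cons_let a q : lets (Let a :: q) = a :: lets q. Proof. by []. Qed.
Lemma lets_cat q1 q2 : lets (q1 ++ q2) = lets q1 ++ lets q2.
Proof. by rewrite /lets map_cat flatten_cat. Qed.

Lemma lets_sub h q : subseq (lets q) (subst h q).
Proof.
elim: q => [//|[x|a] q IH]; rewrite subst_cons /=.
  by apply: subseq_trans IH (suffix_subseq _ _).
by rewrite eqxx.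
Qed.

Lemma subseq_split (a : S) s w : subseq (a :: s) w ->
  exists w0 w1, w = w0 ++ a :: w1 /\ subseq s w1.
Proof.
elim: w => [//|b w IH] /=; case: eqP => [->|_] H.
  by exists [::], w.
by case: (IH H) => w0 [w1 [-> H1]]; exists (b :: w0), w1.
Qed.

Lemma fs_sup q : q != [::] -> regular q ->
  (forall q1 q2 a b, q <> q1 ++ Let a :: Let b :: q2) ->
  (forall q' b, q <> rcons q' (Let b)) ->
  forall w, subseq (lets q) w -> (forall a q', q = Let a :: q' -> exists w', w = a :: w') ->
  exists h, subst h q = w.
Proof.
elim: q => [//|s q IH] _ Hr Hadj Hend w Hsub Hhd.
case: s Hr Hadj Hend Hsub Hhd => [x|a] Hr Hadj Hend Hsub Hhd.
- have Hx := regular_head Hr.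
  case: q IH Hr Hadj Hend Hsub Hhd Hx => [|s q] IH Hr Hadj Hend Hsub Hhd Hx.
    by exists (fun _ => w); rewrite subst_cons /= cats0.
  have IH' := IH isT (regular_cons Hr).
  have Hadj' : forall q1 q2 a b, s :: q <> q1 ++ Let a :: Let b :: q2.
    by move=> q1 q2 a b E; apply: (Hadj (Var x :: q1) q2 a b); rewrite E.
  have Hend' : forall q' b, s :: q <> rcons q' (Let b).
    by move=> q' b E; apply: (Hend (Var x :: q') b); rewrite E.
  clear IH Hadj Hend; case: s IH' Hadj' Hend' Hsub Hhd Hx Hr => [y|a] IH' Hadj' Hend' Hsub Hhd Hx Hr.
  + case: (IH' Hadj' Hend' w Hsub) => [a q' //|h Hh].
    by exists (upd h x [::]); rewrite subst_cons subst_upd_notin //= /upd eqxx Hh.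
  + rewrite lets_cons_var lets_cons_let in Hsub.
    case: (subseq_split Hsub) => w0 [w1 [Ew Hs1]].
    case: (IH' Hadj' Hend' (a :: w1)) => [|a' q' [<- _]|h Hh].
    * by rewrite lets_cons_let /= eqxx.
    * by exists w1.
    by exists (upd h x w0); rewrite subst_cons subst_upd_notin //= /upd eqxx Hh Ew.
- case: (Hhd a q erefl) => w' Ew; subst w.
  case: q IH Hr Hadj Hend Hsub Hhd => [|s q] IH Hr Hadj Hend Hsub Hhd.
    by case: (Hend [::] a).
  case: s IH Hr Hadj Hend Hsub Hhd => [y|b] IH Hr Hadj Hend Hsub Hhd; last first.
    by case: (Hadj [::] q a b).
  have Hadj' : forall q1 q2 a b, Var y :: q <> q1 ++ Let a :: Let b :: q2.
    by move=> q1 q2 a' b E; apply: (Hadj (Let a :: q1) q2 a' b); rewrite E.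
  have Hend' : forall q' b, Var y :: q <> rcons q' (Let b).
    by move=> q' b E; apply: (Hend (Let a :: q') b); rewrite E.
  rewrite lets_cons_let /= eqxx in Hsub.
  case: (IH isT (regular_cons Hr) Hadj' Hend' w' Hsub) => [//|h Hh].
  by exists h; rewrite subst_cons Hh.
Qed.


Lemma subst_head h a q : exists w, subst h (Let a :: q) = a :: w.
Proof. by exists (subst h q). Qed.

Lemma subst_last h q b : exists w, subst h (rcons q (Let b)) = rcons w b.
Proof. by exists (subst h q); rewrite subst_rcons cats1. Qed.

Lemma subst_adj h q1 q2 a b :
  subst h (q1 ++ Let a :: Let b :: q2) = subst h q1 ++ a :: b :: subst h q2.
Proof. by rewrite subst_cat. Qed.

Lemma cat_split (w1 w2 v1 v2 : seq S) : w1 ++ w2 = v1 ++ v2 -> size w1 <= size v1 ->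
  exists r, v1 = w1 ++ r /\ w2 = r ++ v2.
Proof.
elim: w1 v1 => [|a w1 IH] [|b v1] //= E Hs.
- by exists [::].
- by exists (b :: v1).
- case: E => -> E; case: (IH _ E Hs) => r [-> ->]; by exists r.
Qed.

Lemma ins_lemma q h w1 w2 (e : S) : regular q -> subst h q = w1 ++ w2 ->
  (exists h', subst h' q = w1 ++ e :: w2) \/
  (exists a q', q = Let a :: q' /\ w1 = [::]) \/
  (exists q' b, q = rcons q' (Let b) /\ w2 = [::]) \/
  (exists q1 q2 a b, q = q1 ++ Let a :: Let b :: q2 /\ w1 = rcons (subst h q1) a) \/
  (q = [::]).
Proof.
elim: q w1 w2 => [|s q IH] w1 w2 Hr E; first by right; right; right; right.
case: s Hr E => [x|a] Hr E.
- have Hx := regular_head Hr.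
  rewrite subst_cons /= in E.
  case: (leqP (size w1) (size (h x))) => Hle.
  + case: (cat_split (esym E) Hle) => r [Ehx Ew2].
    left; exists (upd h x (w1 ++ e :: r)).
    by rewrite subst_cons subst_upd_notin //= /upd eqxx -catA /= Ew2.
  + case: (cat_split E (ltnW Hle)) => r [Ew1 E'].
    have Hne : r != [::].
      by apply/eqP => Er; move: Hle; rewrite Ew1 Er cats0 ltnn.
    rewrite Ew1.
    case: (IH _ _ (regular_cons Hr) E') => [[h' Hh']|[[a' [q' [Eq Ew]]]|[[q' [b [Eq Ew]]]|[[q1 [q2 [a [b [Eq Ew]]]]]|Eq]]]].
    * left; exists (upd h' x (h x)).
      by rewrite subst_cons subst_upd_notin //= /upd eqxx Hh' catA.
    * by rewrite Ew in Hne.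
    * right; right; left; exists (Var x :: q'), b; split => //; by rewrite Eq.
    * right; right; right; left; exists (Var x :: q1), q2, a, b; split; first by rewrite Eq.
      rewrite Ew subst_cons /=; by rewrite rcons_cat.
    * by move: E'; rewrite Eq; case: r Hne {Ew1 Hle}.
- rewrite subst_cons /= in E.
  case: w1 E => [|c w1] E.
    by right; left; exists a, q.
  case: E => <- E.
  case: (IH _ _ (regular_cons Hr) E) => [[h' Hh']|[[a' [q' [Eq Ew]]]|[[q' [b [Eq Ew]]]|[[q1 [q2 [a0 [b [Eq Ew]]]]]|Eq]]]].
  + by left; exists h'; rewrite subst_cons Hh'.
  + right; right; right; left; exists [::], q', a, a'; split; first by rewrite Eq.
    by rewrite Ew.
  + right; right; left; exists (Let a :: q'), b; split => //; by rewrite Eq.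
  + right; right; right; left; exists (Let a :: q1), q2, a0, b; split; first by rewrite Eq.
    by rewrite Ew.
  + subst q; case: w1 E => [|? ?] //; case: w2 => [|? ?] // _.
    by right; right; left; exists [::], a.
Qed.

Lemma size_subst_ge h q y :
  size (lets q) + count (pred1 (Var y)) q * size (h y) <= size (subst h q).
Proof.
elim: q => [|[x|a] q IH] //; rewrite subst_cons size_cat.
  rewrite lets_cons_var /=; case: eqP => [[->]|_] /=; rewrite mulnDl ?mul1n ?mul0n.
    by rewrite addnCA leq_add2l.
  by rewrite add0n; apply: leq_trans IH (leq_addl _ _).
Qed.

End Gen.

Lemma path_infix (T : Type) (R : rel T) x s w1 w2 a b :
  path R x s -> x :: s = w1 ++ a :: b :: w2 -> R a b.
Proof.
elim: w1 x s => [|c w1 IH] x s /= Hp [E1 E2]; subst.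
  by case/andP: Hp.
case: w1 IH Hp => [|d w1] IH /= Hp.
  by case/and3P: Hp.
by case/andP: Hp => _ Hp; apply: (IH d (w1 ++ a :: b :: w2)).
Qed.

Section BP.
Variable S : eqType.
Implicit Types (q : pattern S) (h : nat -> seq S) (w : seq S) (rest : seq (S * seq nat)).

Lemma bp_nil (X1 : seq nat) : block_pattern X1 [::] = map Var X1 :> pattern S.
Proof. by rewrite /block_pattern /= cats0. Qed.

Lemma bp_cons X1 (a : S) X rest :
  block_pattern X1 ((a, X) :: rest) = map Var X1 ++ Let a :: block_pattern X rest.
Proof. by []. Qed.

Lemma lets_map_var (X : seq nat) : lets (map Var X : pattern S) = [::].
Proof. by elim: X. Qed.

Lemma lets_bp X1 rest : lets (block_pattern X1 rest) = map fst rest.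
Proof.
elim: rest X1 => [|[a X] rest IH] X1; first by rewrite bp_nil lets_map_var.
by rewrite bp_cons lets_cat lets_map_var lets_cons_let IH.
Qed.

Lemma subst_map_var h (X : seq nat) : subst h (map Var X) = flatten (map h X).
Proof. by elim: X => //= x X IH; rewrite subst_cons IH. Qed.

Lemma subst_bp h X1 rest : subst h (block_pattern X1 rest) =
  flatten (map h X1) ++ flatten [seq aX.1 :: flatten (map h aX.2) | aX <- rest].
Proof.
elim: rest X1 => [|[a X] rest IH] X1; first by rewrite bp_nil subst_map_var cats0.
by rewrite bp_cons subst_cat subst_map_var subst_cons IH.
Qed.

Lemma var_in_bp X1 rest i y : y \in nth [::] (X1 :: map snd rest) i ->
  Var y \in (block_pattern X1 rest : pattern S).
Proof.
elim: rest X1 i => [|[a X] rest IH] X1 [|i] /=.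
- by rewrite bp_nil mem_map // => x1 x2 [].
- by rewrite nth_nil.
- by move=> H; rewrite bp_cons mem_cat mem_map ?H // => x1 x2 [].
- by move=> H; rewrite bp_cons mem_cat inE (IH X i H) !orbT.
Qed.

Lemma flatten_nil (T : Type) (U : eqType) (f : U -> seq T) (s : seq U) :
  (forall v, v \in s -> f v = [::]) -> flatten (map f s) = [::].
Proof. by elim: s => //= v s IH H; rewrite H ?inE ?eqxx // IH // => v' Hv'; rewrite H // inE Hv' orbT. Qed.

Lemma bp_sup X1 rest : X1 != [::] -> all (fun aX => aX.2 != [::]) rest ->
  regular (block_pattern X1 rest) ->
  forall w, subseq (map fst rest) w -> exists h, subst h (block_pattern X1 rest) = w.
Proof.
elim: rest X1 => [|[a X] rest IH] X1 HX1 Hall Hr w Hw.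
- case: X1 HX1 Hr => [//|y X1'] _ Hr.
  exists (fun v => if v == y then w else [::]).
  rewrite bp_nil subst_map_var /= eqxx.
  have -> : flatten [seq (if v == y then w else [::]) | v <- X1'] = [::].
    have Hn : Var y \notin (map Var X1' : pattern S).
      by apply: regular_head; rewrite bp_nil in Hr; exact Hr.
    apply: flatten_nil => v Hv; case: eqP => // E.
    by subst v; rewrite (map_f Var Hv) in Hn.
  by rewrite cats0.
- case/andP: Hall => HX Hall.
  case: (subseq_split Hw) => w0 [w1 [Ew Hw1]].
  rewrite bp_cons in Hr.
  case: (IH X HX Hall (@regular_cons _ (Let a) _ (regular_catr Hr)) w1 Hw1) => h' Hh'.
  case: X1 HX1 Hr => [//|y X1'] _ Hr.
  exists (fun v => if v == y then w0 else if v \in X1' then [::] else h' v).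
  rewrite bp_cons subst_cat subst_map_var /= eqxx subst_cons /=.
  have -> : flatten [seq (if v == y then w0 else if v \in X1' then [::] else h' v) | v <- X1'] = [::].
    have Hn : Var y \notin (map Var X1' : pattern S).
      exact: regular_head (regular_catl Hr).
    apply: flatten_nil => v Hv; rewrite Hv; case: eqP => // E.
    by subst v; rewrite (map_f Var Hv) in Hn.
  rewrite cats0 /=.
  rewrite Ew; congr (_ ++ _ :: _); rewrite -Hh'.
  apply: subst_eq_on => v Hv.
  have Hinj : injective (@Var S) by move=> ? ? [].
  have Hnot : Var v \notin (map Var (y :: X1') : pattern S).
    apply/negP => Hin; have := regular_disj Hr Hin; by rewrite inE Hv orbT.
  rewrite (mem_map Hinj) inE negb_or in Hnot; case/andP: Hnot => /negbTE -> /negbTE ->.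
  by [].
Qed.


Definition keepS (keep : pred nat) (s : sym S) := match s with Var y => keep y | Let _ => true end.

Lemma filter_bp keep X1 rest : filter (keepS keep) (block_pattern X1 rest) =
  block_pattern (filter keep X1) [seq (aX.1, filter keep aX.2) | aX <- rest].
Proof.
elim: rest X1 => [|[a X] rest IH] X1.
  by rewrite !bp_nil filter_map.
by rewrite !bp_cons filter_cat filter_map /= IH.
Qed.

Lemma subst_filter keep h h' q : (forall x, ~~ keep x -> h x = [::]) ->
  (forall x, keep x -> h x = h' x) -> subst h q = subst h' (filter (keepS keep) q).
Proof.
move=> H0 H1; elim: q => [//|[x|a] q IH] /=.
  case: (boolP (keep x)) => Hk; rewrite subst_cons /= ?subst_cons /= IH.
    by rewrite H1.
  by rewrite H0.
by rewrite !subst_cons IH.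
Qed.

Lemma count_filter_keepS keep q y : count (pred1 (Var y)) (filter (keepS keep) q) =
  if keep y then count (pred1 (Var y)) q else 0.
Proof.
rewrite count_filter; case: (boolP (keep y)) => Hk.
  by apply: eq_count => s /=; case: eqP => // ->.
rewrite (eq_count (a2 := pred0)) ?count_pred0 // => s /=; case: eqP => // -> /=.
by apply: negbTE.
Qed.

Lemma caseA_sup X1 rest :
  let keep := fun y => count (pred1 (Var y)) (block_pattern X1 rest : pattern S) == 1 in
  has keep X1 -> all (fun aX => has keep aX.2) rest ->
  forall w, subseq (map fst rest) w -> inL (block_pattern X1 rest) w.
Proof.
move=> keep H1 Hall w Hw.
set p := block_pattern X1 rest.
have Hr : regular (filter (keepS keep) p).
  move=> y; rewrite count_filter_keepS; case: ifP => // /eqP ->; by [].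
rewrite /p filter_bp in Hr.
case: (bp_sup (X1 := filter keep X1) (rest := [seq (aX.1, filter keep aX.2) | aX <- rest]) _ _ Hr (w := w) _).
- by rewrite -has_filter.
- rewrite all_map; apply: sub_all Hall => aX /=; by rewrite -has_filter.
- by rewrite -map_comp.
move=> h' Hh'.
exists (fun y => if keep y then h' y else [::]).
rewrite (subst_filter (keep := keep) (h' := h')) ?filter_bp ?Hh' //.
- by move=> x /negbTE ->.
- by move=> x ->.
Qed.

End BP.

Section CaseB.
Variable S : eqType.
Implicit Types (q : pattern S) (h : nat -> seq S) (w : seq S) (rest : seq (S * seq nat)).

Lemma flatten_empties (rs : seq (S * seq S)) : sumn (map (fun r => size r.2) rs) = 0 ->
  flatten [seq r.1 :: r.2 | r <- rs] = map fst rs.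
Proof.
elim: rs => //= [[a g] rs IH] /= H.
have Hg : g = [::] by apply/eqP; rewrite -size_eq0; lia.
by rewrite Hg /= IH //; lia.
Qed.

Lemma nth_ins (u : seq S) l (c d0 : S) : l <= size u -> nth d0 (take l u ++ c :: drop l u) l = c.
Proof. by move=> Hl; rewrite nth_cat size_takel // ltnn subnn. Qed.

Lemma seqlemma (rs : seq (S * seq S)) (g0 : seq S) l (c d0 : S) :
  size g0 + sumn (map (fun r => size r.2) rs) = 1 ->
  nth [::] (g0 :: map snd rs) l = [::] -> l <= size rs ->
  c != nth d0 (map fst rs) l.-1 -> c != nth d0 (map fst rs) l ->
  g0 ++ flatten [seq r.1 :: r.2 | r <- rs] != take l (map fst rs) ++ c :: drop l (map fst rs).
Proof.
elim: rs g0 l => [|[a g1] rs IH] g0 l Hs Hn Hl Hc1 Hc2.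
- move: Hl; rewrite leqn0 => /eqP Hl0; subst l.
  move: Hn Hs => /= ->; by [].
- case: g0 Hs Hn => [|f g0] Hs Hn.
  + case: l Hn Hl Hc1 Hc2 => [|l] Hn Hl Hc1 Hc2 /=.
      by apply/negP => /eqP [E]; rewrite E /= eqxx in Hc2.
    apply/negP => /eqP [E]; move/eqP: E; apply/negP.
    apply: IH => //=.
    by case: l {Hn Hl} Hc1 Hc2 => [|l] /= Hc1 Hc2.
  + have Hg0 : g0 = [::] by apply/eqP; rewrite -size_eq0; move: Hs => /=; lia.
    have Hsum : sumn (map (fun r => size r.2) ((a, g1) :: rs)) = 0 by move: Hs => /=; lia.
    subst g0.
    have -> : [:: f] ++ flatten [seq r.1 :: r.2 | r <- (a, g1) :: rs] = f :: map fst ((a, g1) :: rs).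
      by rewrite -flatten_empties.
    case: l Hn Hl Hc1 Hc2 => [//|l] Hn Hl Hc1 Hc2.
    apply/negP => /eqP E.
    have := congr1 (nth d0 ^~ l.+1) E.
    rewrite nth_ins; last by rewrite size_map.
    by move=> E2; rewrite /= -E2 eqxx in Hc1.
Qed.

Lemma nseq_subst (c : S) (X : seq nat) : flatten (map (fun _ => [:: c]) X) = nseq (size X) c.
Proof. by elim: X => //= x X ->. Qed.

Definition Rg (c : S) := fun x y : S => (x == c) || (y == c).

Lemma path_nseq (c : S) n : path (Rg c) c (nseq n c) /\ last c (nseq n c) = c.
Proof. by elim: n => //= n [-> ->]; rewrite /Rg eqxx. Qed.

Lemma P_struct (c : S) X1 rest : X1 != [::] -> all (fun aX => aX.2 != [::]) rest ->
  exists P', subst (fun _ => [:: c]) (block_pattern X1 rest) = c :: P' /\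
    path (Rg c) c P' /\ last c P' = c.
Proof.
move=> H1 Hall.
have Hrest : path (Rg c) c (flatten [seq aX.1 :: flatten (map (fun _ => [:: c]) aX.2) | aX <- rest])
  /\ last c (flatten [seq aX.1 :: flatten (map (fun _ => [:: c]) aX.2) | aX <- rest]) = c.
  elim: rest Hall => [|[a X] rest IH] //= /andP [HX Hall].
  rewrite nseq_subst; case: X HX => [//|x X] _ /=.
  rewrite cat_path last_cat /= /Rg !eqxx orbT /=.
  have [Hp Hl] := path_nseq c (size X).
  case: (IH Hall) => Hp' Hl'.
  by rewrite -/(Rg c) Hp Hl Hp' Hl'.
case: X1 H1 => [//|x X1] _.
exists (nseq (size X1) c ++ flatten [seq aX.1 :: flatten (map (fun _ => [:: c]) aX.2) | aX <- rest]).
rewrite subst_bp nseq_subst /=; split => //.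
have [Hp Hl] := path_nseq c (size X1).
by rewrite cat_path last_cat Hp Hl; case: Hrest => -> ->.
Qed.

Lemma caseB_neg X1 rest l (c d0 : S) :
  let p := block_pattern X1 rest in let u := map fst rest in
  l <= size rest ->
  (forall y, y \in nth [::] (X1 :: map snd rest) l -> count (pred1 (Var y)) p != 1) ->
  c != nth d0 u l.-1 -> c != nth d0 u l ->
  ~ inL p (take l u ++ c :: drop l u).
Proof.
move=> p u Hl Hbad Hc1 Hc2 [h Eh].
set rs := [seq (aX.1, flatten (map h aX.2)) | aX <- rest].
have Hu : map fst rs = u by rewrite /rs -map_comp.
have Esub : subst h p = flatten (map h X1) ++ flatten [seq r.1 :: r.2 | r <- rs].
  by rewrite /p subst_bp /rs -map_comp.
have Hsize : size (subst h p) = (size u).+1.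
  have Hlu : l <= size u by rewrite /u size_map.
  by rewrite Eh size_cat /= size_drop size_takel //; lia.
have Hs : size (flatten (map h X1)) + sumn (map (fun r => size r.2) rs) = 1.
  move: Hsize; rewrite Esub size_cat -Hu.
  have -> : forall rs' : seq (S * seq S), size (flatten [seq r.1 :: r.2 | r <- rs']) =
      size rs' + sumn (map (fun r => size r.2) rs').
    by elim=> //= r rs' IH; rewrite size_cat /= IH; lia.
  rewrite size_map; lia.
have Hn : nth [::] (flatten (map h X1) :: map snd rs) l = [::].
  have -> : flatten (map h X1) :: map snd rs = map (fun X => flatten (map h X)) (X1 :: map snd rest).
    by rewrite /rs /= -!map_comp.
  rewrite (nth_map [::]) /=; last by rewrite size_map; lia.
  apply: flatten_nil => y Hy.
  have Hc := count_pos (var_in_bp Hy); have Hb := Hbad y Hy.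
  have := size_subst_ge h p y; rewrite Hsize /p lets_bp -/u => Hge.
  apply/eqP; rewrite -size_eq0; apply/eqP.
  have H2 : 2 <= count (pred1 (Var y)) (block_pattern X1 rest : pattern S) by move: Hb Hc; rewrite /p; lia.
  move: Hge H2; case: (size (h y)) => // s; rewrite mulnS; lia.
have := @seqlemma rs (flatten (map h X1)) l c d0 Hs Hn.
rewrite size_map Hu -Esub Eh eqxx => H.
by have := H Hl Hc1 Hc2.
Qed.


Lemma caseB_teach X1 rest l (c d0 : S) :
  let p := block_pattern X1 rest in let u := map fst rest in
  X1 != [::] -> all (fun aX => aX.2 != [::]) rest -> l <= size rest ->
  (forall y, y \in nth [::] (X1 :: map snd rest) l -> count (pred1 (Var y)) p != 1) ->
  c != nth d0 u l.-1 -> c != nth d0 u l ->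
  teaching_set (@reg_class S) p
    [:: (u, true); (subst (fun _ => [:: c]) p, true); (take l u ++ c :: drop l u, false)].
Proof.
move=> p u HX1 Hall Hl Hbad Hc1 Hc2.
have Hlu : l <= size u by rewrite /u size_map.
have HnotN := caseB_neg Hl Hbad Hc1 Hc2.
have [P' [EP [HpP HlP]]] := P_struct c HX1 Hall.
split.
  move=> e; rewrite !inE => /or3P [/eqP->|/eqP->|/eqP->] /=.
  - split => // _; exists (fun _ => [::]); rewrite /p subst_bp.
    have -> : flatten (map (fun _ => [::] : seq S) X1) = [::] by apply: flatten_nil.
    rewrite /u /=; elim: (rest) => //= aX rs ->.
    by rewrite (@flatten_nil S _ (fun _ => [::])).
  - by split => // _; exists (fun _ => [:: c]).
  - by split => // H; case: (HnotN H).
move=> q [Hq Hr] Hcons.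
have [_ /(_ erefl) [h Eh]] := Hcons (u, true) (mem_head _ _).
have [_ /(_ erefl) [hP EhP]] := Hcons (subst (fun _ => [:: c]) p, true) ltac:(by rewrite !inE eqxx orbT).
have [HN _] := Hcons (take l u ++ c :: drop l u, false) ltac:(by rewrite !inE eqxx !orbT).
rewrite /= in Eh EhP HN.
have Eh' : subst h q = take l u ++ drop l u by rewrite cat_take_drop.
case: (ins_lemma c Hr Eh') => [[h' Hh']|[[a [q' [Eq Ew]]]|[[q' [b [Eq Ew]]]|[[q1 [q2 [a [b [Eq Ew]]]]]|Eq]]]].
- by have := HN (ex_intro _ h' Hh').
- move: Eh EhP; rewrite Eq !subst_cons /= EP => Eh [Ea _].
  have Hl0 : l = 0.
    by move: Ew => /eqP; rewrite -size_eq0 size_take -Eh /=; case: ifP => // _ /eqP.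
  by move: Hc1; rewrite Hl0 /= -Eh /= Ea eqxx.
- move: Eh EhP; rewrite Eq !subst_rcons /= EP => Eh EP'.
  have Hb : last c P' = b by have := congr1 (last c) EP'; rewrite cats1 last_rcons.
  rewrite HlP in Hb.
  have Hl0 : l = size u by have := congr1 size Ew; rewrite size_drop /=; lia.
  by move: Hc1; rewrite Hl0 nth_last -Eh cats1 last_rcons Hb eqxx.
- move: Eh EhP; rewrite Eq !subst_adj EP => Eh EP'.
  have Hab := path_infix HpP (esym EP'); rewrite /Rg in Hab.
  have Hsl : l = (size (subst h q1)).+1.
    by have := congr1 size Ew; rewrite size_takel // size_rcons.
  move: Hc1 Hc2; rewrite Hsl /= -Eh !nth_cat ltnn subnn ltnNge leqnSn /= subSnn /=.
  by case/orP: Hab => /eqP -> ; rewrite eqxx.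
- by rewrite Eq in Hq.
Qed.

End CaseB.

Section Cyc.
Variable S : finType.
Variable hz : 2 < #|S|.

Definition rk (x : S) := index x (enum S).
Lemma rk_lt x : rk x < #|S|.
Proof. by rewrite /rk cardE index_mem mem_enum. Qed.
Lemma rk_inj : injective rk.
Proof.
move=> x y E; have := nth_index x (mem_enum S x); have := nth_index x (mem_enum S y).
by rewrite /rk in E; rewrite E => -> .
Qed.
Lemma nth_rk i (x0 : S) : i < #|S| -> rk (nth x0 (enum S) i) = i.
Proof. by move=> H; rewrite /rk index_uniq ?enum_uniq // -cardE. Qed.
Lemma eq_rk x y : (x == y) = (rk x == rk y).
Proof. by apply/eqP/eqP => [->|/rk_inj]. Qed.

Definition sc (x : S) := nth x (enum S) (if (rk x).+1 < #|S| then (rk x).+1 else 0).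
Definition pr (x : S) := nth x (enum S) (if rk x == 0 then #|S|.-1 else (rk x).-1).
Lemma rk_sc x : rk (sc x) = if (rk x).+1 < #|S| then (rk x).+1 else 0.
Proof. by rewrite /sc nth_rk //; case: ifP => //; lia. Qed.
Lemma rk_pr x : rk (pr x) = if rk x == 0 then #|S|.-1 else (rk x).-1.
Proof. by rewrite /pr nth_rk //; have := rk_lt x; case: ifP; lia. Qed.

Definition d (x y : S) := if rk x <= rk y then rk y - rk x else #|S| + rk y - rk x.
Definition fw (x y : S) := if x == y then #|S| else d x y.
Definition bw (x y : S) := d y x.

Ltac ar := rewrite /fw /bw /d ?eq_rk ?rk_sc ?rk_pr;
  repeat match goal with |- context [rk ?x] => 
    let H := fresh in have H := rk_lt x; move: H; generalize (rk x); intro end;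
  repeat (match goal with |- context [if ?c then _ else _] =>
    lazymatch c with context [if _ then _ else _] => fail | _ => let E := fresh in case E: c end end);
  intros; lia.

Lemma d_xx x : d x x = 0. Proof. ar. Qed.
Lemma d0_eq x y : d x y = 0 -> x = y.
Proof. move=> H; apply: rk_inj; move: H; ar. Qed.
Lemma d_lt x y : d x y < #|S|. Proof. ar. Qed.
Lemma ii_f x y w : d x w <= fw x y + d y w. Proof. ar. Qed.
Lemma iv_f x y w : fw x w <= fw x y + d y w. Proof. ar. Qed.
Lemma tri_b x y w : bw x w <= bw x y + bw y w. Proof. ar. Qed.
Lemma fw_sc x : fw x (sc x) = 1. Proof. ar. Qed.
Lemma bw_pr x : bw x (pr x) = 1. Proof. ar. Qed.
Lemma bw_xx x : bw x x = 0. Proof. ar. Qed.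
Lemma d_pr x : d (pr x) x = 1. Proof. ar. Qed.
Lemma d_sc x : d x (sc x) = 1. Proof. ar. Qed.
Lemma fw_pr x : fw (pr x) x = 1. Proof. ar. Qed.
Lemma d_dec_sc x y : x != y -> d (sc x) y = (d x y).-1. Proof. ar. Qed.
Lemma d_dec_pr x y : x != y -> d y (pr x) = (d y x).-1. Proof. ar. Qed.
Lemma d_sc_x x : d (sc x) x = #|S|.-1. Proof. ar. Qed.
Lemma sc_pr x : sc (pr x) = x. Proof. apply: rk_inj; ar. Qed.
Lemma sc_neq x : (sc x == x) = false. Proof. ar. Qed.
Lemma pr_neq x : (pr x == x) = false. Proof. ar. Qed.
Lemma sc_pr_neq x : (sc x == pr x) = false. Proof. ar. Qed.
Lemma gain_int x e y : fw x e + fw e y <= fw x y -> bw x e + bw e y <= bw x y -> False.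
Proof. ar. Qed.
Lemma gain_front a e : d (pr a) e + fw e a <= 1 -> bw a e + bw e a <= 0 -> False.
Proof. ar. Qed.
Lemma gain_end a e : fw a e + d e (sc a) <= 1 -> bw a e + bw e a <= 0 -> False.
Proof. ar. Qed.

Lemma fw_pos x y : 0 < fw x y. Proof. ar. Qed.

Fixpoint pcc (c : S -> S -> nat) (x : S) (s : seq S) : nat :=
  if s is y :: s' then c x y + pcc c y s' else 0.

Lemma pcc_cat c x s1 s2 : pcc c x (s1 ++ s2) = pcc c x s1 + pcc c (last x s1) s2.
Proof. by elim: s1 x => //= y s1 IH x; rewrite IH addnA. Qed.

Lemma pc_ge (c0 c1 : S -> S -> nat) : (forall x, c0 x x = 0) ->
  (forall x y w, c0 x w <= c1 x y + c0 y w) -> forall x v, c0 x (last x v) <= pcc c1 x v.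
Proof.
move=> H0 Hii x v; elim: v x => /= [|y v IH] x; first by rewrite H0.
by apply: leq_trans (Hii x y _) _; rewrite leq_add2l.
Qed.

Lemma cost_sub (c0 c1 : S -> S -> nat) : (forall x, c0 x x = 0) ->
  (forall x y w, c0 x w <= c1 x y + c0 y w) -> (forall x y w, c1 x w <= c1 x y + c0 y w) ->
  forall v0 v w0 w, subseq (w0 :: w) (v0 :: v) ->
  c0 v0 w0 + pcc c1 w0 w + c0 (last w0 w) (last v0 v) <= pcc c1 v0 v.
Proof.
move=> H0 Hii Hiv v0 v; elim: v v0 => [|v1 v IH] v0 w0 w /=.
  case: (w0 =P v0) => [->|_] /eqP // E.
  by rewrite E /= !H0.
case: (w0 =P v0) => [->|_] H.
  case: w H => [|w1 w] H /=.
    rewrite H0 /= add0n; apply: leq_trans (Hii _ v1 _) _; rewrite leq_add2l.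
    exact: pc_ge.
  have := IH v1 w1 w H; rewrite H0 add0n => H'.
  set t := c0 (last w1 w) _ in H' *; have := Hiv v0 v1 w1; lia.
have := IH v1 w0 w H => H'.
set t := c0 (last w0 w) _ in H' *; have := Hii v0 v1 w0; lia.
Qed.

Fixpoint fpath (x : S) n := if n is n'.+1 then sc x :: fpath (sc x) n' else [::].

Lemma iter_sc n x y : d x y = n -> iter n sc x = y.
Proof.
elim: n x => [|n IH] x H; first exact: d0_eq.
rewrite iterSr; apply: IH; rewrite d_dec_sc ?H //.
by apply/eqP => E; rewrite E d_xx in H.
Qed.

Lemma fpath_last_iter n x : last x (fpath x n) = iter n sc x.
Proof. by elim: n x => //= n IH x; rewrite IH -iterS iterSr. Qed.

Lemma fpath_last x y : last x (fpath x (fw x y)) = y.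
Proof.
rewrite fpath_last_iter /fw; case: eqP => [->|_]; last exact: iter_sc.
have -> : #|S| = (#|S|.-1).+1 by lia.
by rewrite iterSr; apply: iter_sc; rewrite d_sc_x.
Qed.

Lemma fpath_path n x : path (fun a b => b == sc a) x (fpath x n).
Proof. by elim: n x => //= n IH x; rewrite eqxx IH. Qed.

Lemma fpath_cost n x : pcc fw x (fpath x n) = n.
Proof. by elim: n x => //= n IH x; rewrite IH fw_sc. Qed.

Lemma fpath_rcons x y : exists mid, fpath x (fw x y) = rcons mid y.
Proof.
have := fw_pos x y; have := fpath_last x y.
case: (fw x y) => // n; rewrite [fpath _ _]/= => Hl _.
by exists (belast (sc x) (fpath (sc x) n)); rewrite -Hl /= lastI.
Qed.

Fixpoint fchain (x : S) (s : seq S) : seq S :=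
  if s is y :: s' then fpath x (fw x y) ++ fchain y s' else [::].

Lemma fchain_sub x s : subseq (x :: s) (x :: fchain x s).
Proof.
elim: s x => [|y s IH] x /=; rewrite eqxx //.
have [mid ->] := fpath_rcons x y.
rewrite cat_rcons; apply: subseq_trans (IH y) (suffix_subseq mid _).
Qed.

Lemma fchain_last x s : last x (fchain x s) = last x s.
Proof. by elim: s x => //= y s IH x; rewrite last_cat fpath_last IH. Qed.

Lemma fchain_path x s : path (fun a b => b == sc a) x (fchain x s).
Proof. by elim: s x => //= y s IH x; rewrite cat_path fpath_path fpath_last IH. Qed.

Lemma fchain_cost x s : pcc fw x (fchain x s) = pcc fw x s.
Proof. by elim: s x => //= y s IH x; rewrite pcc_cat fpath_cost fpath_last IH. Qed.

Fixpoint bpath (x : S) n := if n is n'.+1 then pr x :: bpath (pr x) n' else [::].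

Lemma iter_pr n x y : d y x = n -> iter n pr x = y.
Proof.
elim: n x => [|n IH] x H; first by apply/esym/d0_eq.
rewrite iterSr; apply: IH; rewrite d_dec_pr ?H //.
by apply/eqP => E; rewrite E d_xx in H.
Qed.

Lemma bpath_last_iter n x : last x (bpath x n) = iter n pr x.
Proof. by elim: n x => //= n IH x; rewrite IH -iterS iterSr. Qed.

Definition bseg (x y : S) := if x == y then [:: y] else bpath x (bw x y).

Lemma bseg_last x y : last x (bseg x y) = y.
Proof. rewrite /bseg; case: eqP => [->|_] //; by rewrite bpath_last_iter; apply: iter_pr. Qed.

Lemma bseg_path x y : path (fun a b => (b == a) || (b == pr a)) x (bseg x y).
Proof.
rewrite /bseg; case: eqP => [->|_] /=; first by rewrite eqxx.
by move: (bw x y) => n; elim: n x => //= n IH x; rewrite eqxx orbT IH.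
Qed.

Lemma bseg_cost x y : pcc bw x (bseg x y) = bw x y.
Proof.
rewrite /bseg; case: eqP => [->|_] /=; first by rewrite bw_xx.
by move: (bw x y) => n; elim: n x => //= n IH x; rewrite IH bw_pr.
Qed.

Lemma bseg_rcons x y : exists mid, bseg x y = rcons mid y.
Proof.
rewrite /bseg; case: eqP => [_|H]; first by exists [::].
have Hl := bseg_last x y; rewrite /bseg (introF eqP H) in Hl.
have : bw x y != 0 by apply/eqP => /d0_eq E; apply: H.
case: (bw x y) Hl => // n Hl _.
by exists (belast (pr x) (bpath (pr x) n)); rewrite -Hl /= lastI.
Qed.

Fixpoint bchain (x : S) (s : seq S) : seq S :=
  if s is y :: s' then bseg x y ++ bchain y s' else [::].

Lemma bchain_sub x s : subseq (x :: s) (x :: bchain x s).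
Proof.
elim: s x => [|y s IH] x /=; rewrite eqxx //.
have [mid ->] := bseg_rcons x y.
rewrite cat_rcons; apply: subseq_trans (IH y) (suffix_subseq mid _).
Qed.

Lemma bchain_last x s : last x (bchain x s) = last x s.
Proof. by elim: s x => //= y s IH x; rewrite last_cat bseg_last IH. Qed.

Lemma bchain_path x s : path (fun a b => (b == a) || (b == pr a)) x (bchain x s).
Proof. by elim: s x => //= y s IH x; rewrite cat_path bseg_path bseg_last IH. Qed.

Lemma bchain_cost x s : pcc bw x (bchain x s) = pcc bw x s.
Proof. by elim: s x => //= y s IH x; rewrite pcc_cat bseg_cost bseg_last IH. Qed.

End Cyc.

Lemma ext_lemma (T : eqType) (u c : seq T) : subseq u c -> size u < size c ->
  exists u1 u2 e, u = u1 ++ u2 /\ subseq (u1 ++ e :: u2) c.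
Proof.
elim: c u => [|x c IH] u //= Hs Hlt.
case: u Hs Hlt => [|y u] Hs Hlt.
  by exists [::], [::], x; split => //=; rewrite eqxx sub0seq.
case: (y =P x) Hs => [->|_] Hs.
  have [u1 [u2 [e [E H]]]] := IH u Hs Hlt.
  by exists (x :: u1), u2, e; split; [rewrite E | rewrite /= eqxx].
have Hle := size_subseq Hs.
case: (ltnP (size (y :: u)) (size c)) => H.
  have [u1 [u2 [e [E H']]]] := IH _ Hs H.
  exists u1, u2, e; split => //; apply: subseq_trans H' (subseq_cons _ _).
have Ec : y :: u = c.
  by apply/eqP; rewrite -(size_subseq_leqif Hs); lia.
by exists [::], (y :: u), x; split => //=; rewrite eqxx Ec.
Qed.

Section NL.
Variable S : finType.

Definition ZZ (a : S) L := flatten (nseq L [seq x <- enum S | x != a]).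

Lemma ZZ_sub a L (c : seq S) : all (fun x => x != a) c -> size c <= L -> subseq c (ZZ a L).
Proof.
elim: L c => [|L IH] [|x c] //=; first by rewrite sub0seq.
move=> /andP [Hx Hc] HL.
rewrite -cat1s; apply: cat_subseq; last exact: IH.
by rewrite sub1seq mem_filter Hx mem_enum.
Qed.

Lemma ZZ_notin a L : a \notin ZZ a L.
Proof.
elim: L => //= L IH; rewrite mem_cat negb_or IH andbT mem_filter.
by rewrite eqxx.
Qed.

Fixpoint NL (u : seq S) L := match u with
  | [::] => [::]
  | [:: a] => ZZ a L
  | a :: u' => ZZ a L ++ a :: NL u' L end.

Lemma subseq_notin_pre (a : S) t s1 s2 : a \notin s1 ->
  subseq (a :: t) (s1 ++ s2) = subseq (a :: t) s2.
Proof.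
elim: s1 => //= x s1 IH; rewrite inE negb_or => /andP [H1 H2].
by rewrite (negbTE H1) IH.
Qed.

Lemma NL_not u L : u != [::] -> ~~ subseq u (NL u L).
Proof.
elim: u => [//|a [|b u] IH] _.
  by rewrite sub1seq ZZ_notin.
rewrite [NL _ _]/= subseq_notin_pre ?ZZ_notin //= eqxx.
exact: IH.
Qed.

Lemma split_first (a : S) c : a \in c -> exists c1 c2, c = c1 ++ a :: c2 /\ a \notin c1.
Proof.
elim: c => [//|x c IH]; rewrite inE; case: (a =P x) => [->|Hx] /= H.
  by exists [::], c.
have [c1 [c2 [E H1]]] := IH H; exists (x :: c1), c2; rewrite E; split => //.
by rewrite inE negb_or H1 andbT; apply/eqP.
Qed.

Lemma NL_sup u L (c : seq S) : u != [::] -> size c <= L -> ~~ subseq u c -> subseq c (NL u L).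
Proof.
elim: u c => [//|a u IH] c _ HL Hn.
case: (boolP (a \in c)) => Ha; last first.
  have Hs : subseq c (ZZ a L).
    apply: ZZ_sub HL; apply/allP => x Hx; apply/eqP => E; by rewrite -E Hx in Ha.
  case: u IH Hn => [|b u] IH Hn //=.
  by apply: subseq_trans Hs (prefix_subseq _ _).
case: u IH Hn => [|b u] IH Hn.
  by rewrite sub1seq Ha in Hn.
set u' := b :: u.
have [c1 [c2 [Ec H1]]] := split_first Ha.
have H2 : ~~ subseq u' c2.
  apply/negP => H; move/negP: Hn; apply; rewrite Ec.
  by rewrite subseq_notin_pre //= eqxx.
rewrite [NL _ _]/= -/(NL u' L) Ec; apply: cat_subseq.
  apply: ZZ_sub; last by move: HL; rewrite Ec size_cat; lia.
  apply/allP => x Hx; apply/eqP => E; by rewrite -E Hx in H1.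
rewrite /= eqxx; apply: IH => //.
move: HL; rewrite Ec size_cat /=; lia.
Qed.

End NL.

Section CaseA.
Variable S : finType.
Variable hz : 2 < #|S|.

Lemma gain_contra (a1 : S) u' u1 u2 e :
  let am := last a1 u' in
  let P1 := pr a1 :: a1 :: fchain a1 u' ++ [:: sc am] in
  let P2 := a1 :: bchain a1 u' in
  a1 :: u' = u1 ++ u2 -> subseq (u1 ++ e :: u2) P1 -> subseq (u1 ++ e :: u2) P2 -> False.
Proof.
move=> am P1 P2 Eu H1 H2.
have Hd0 : forall x : S, d x x = 0 by move=> x; apply: d_xx.
have HA : forall w0 w', subseq (w0 :: w') P1 ->
    d (pr a1) w0 + pcc (@fw S) w0 w' + d (last w0 w') (sc am) <= (pcc (@fw S) a1 u').+2.
  move=> w0 w' H.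
  have := cost_sub hz (@d_xx _ hz) (ii_f hz) (iv_f hz) H.
  rewrite /P1 /= last_cat /= pcc_cat (fchain_cost hz) (fchain_last hz) /= (fw_pr hz) (fw_sc hz) -/am.
  lia.
have HB : forall w0 w', subseq (w0 :: w') P2 ->
    bw a1 w0 + pcc (@bw S) w0 w' + bw (last w0 w') am <= pcc (@bw S) a1 u'.
  move=> w0 w' H.
  have := cost_sub hz (bw_xx hz) (tri_b hz) (tri_b hz) H.
  by rewrite /P2 (bchain_cost hz) (bchain_last hz).
case: u1 Eu H1 H2 => [|x1 u1] Eu H1 H2.
  rewrite /= in Eu H1 H2; rewrite -Eu in H1 H2.
  have := HA _ _ H1; have := HB _ _ H2; rewrite /= -/am (d_sc hz) (bw_xx hz) => HB' HA'.
  by apply: (@gain_front _ hz a1 e); lia.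
case: Eu => Ex1 Eu'; subst x1.
case: u2 Eu' H1 H2 => [|y u2] Eu' H1 H2.
  rewrite cats0 in Eu'; subst u1.
  have := HA _ _ H1; have := HB _ _ H2.
  rewrite /= pcc_cat !last_cat /= pcc_cat /= (bw_xx hz) (d_pr hz) -/am => HB' HA'.
  by apply: (@gain_end _ hz am e); lia.
have := HA _ _ H1; have := HB _ _ H2.
rewrite !pcc_cat !last_cat /= Eu' pcc_cat /= (d_pr hz) (bw_xx hz).
have -> : am = last y u2 by rewrite /am Eu' last_cat.
move=> HB' HA'.
rewrite pcc_cat /= (d_sc hz) in HA'; rewrite (bw_xx hz) in HB'.
by apply: (@gain_int _ hz (last a1 u1) e y); lia.
Qed.

Lemma caseA_teach X1 rest (a1 : S) u' :
  let p := block_pattern X1 rest in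
  let keep := fun y => count (pred1 (Var y)) p == 1 in
  let am := last a1 u' in
  let P1 := pr a1 :: a1 :: fchain a1 u' ++ [:: sc am] in
  let P2 := a1 :: bchain a1 u' in
  map fst rest = a1 :: u' -> has keep X1 -> all (fun aX => has keep aX.2) rest ->
  teaching_set (@reg_class S) p [:: (P1, true); (P2, true); (NL (a1 :: u') (size P1), false)].
Proof.
move=> p keep am P1 P2 Hu HX1 Hall.
set u := a1 :: u'.
have Hsup : forall w, subseq u w -> inL p w.
  by move=> w Hw; apply: caseA_sup => //; rewrite Hu.
have HuP1 : subseq u P1.
  apply: subseq_trans (subseq_cons _ (pr a1)).
  apply: subseq_trans (fchain_sub hz a1 u') _.
  by rewrite -cat_cons prefix_subseq.
have HuP2 : subseq u P2 by apply: bchain_sub.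
have Hlp : lets p = u by rewrite /p lets_bp Hu.
have Hu0 : u != [::] by [].
have HpN : ~ inL p (NL u (size P1)).
  move=> [h Eh]; have := lets_sub h p; rewrite Hlp Eh => H.
  by move: (NL_not (size P1) Hu0); rewrite H.
split.
  move=> e; rewrite !inE => /or3P [/eqP->|/eqP->|/eqP->] /=.
  - by split => // _; apply: Hsup.
  - by split => // _; apply: Hsup.
  - by split => // H; case: (HpN H).
move=> q [Hq Hr] Hcons.
have [_ /(_ erefl) [h1 Eh1]] := Hcons (P1, true) (mem_head _ _).
have [_ /(_ erefl) [h2 Eh2]] := Hcons (P2, true) ltac:(by rewrite !inE eqxx orbT).
have [HN _] := Hcons (NL u (size P1), false) ltac:(by rewrite !inE eqxx !orbT).
rewrite /= in Eh1 Eh2 HN.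
have HpP1 : path (fun a b => b == sc a) (pr a1) (a1 :: fchain a1 u' ++ [:: sc am]).
  rewrite /= (sc_pr hz) eqxx /= cat_path (fchain_path hz) /= (fchain_last hz) -/am.
  by rewrite eqxx.
have HpP2 := bchain_path hz a1 u'.
have Hadj : forall q1 q2 a b, q <> q1 ++ Let a :: Let b :: q2.
  move=> q1 q2 a b Eq.
  have := path_infix HpP1 (etrans (esym Eh1) (etrans (congr1 (subst h1) Eq) (subst_adj _ _ _ _ _))).
  have := path_infix HpP2 (etrans (esym Eh2) (etrans (congr1 (subst h2) Eq) (subst_adj _ _ _ _ _))).
  move=> /orP [] /eqP E1 /eqP E2; move: E2.
    by rewrite E1; apply/eqP; rewrite eq_sym (sc_neq hz).
  by rewrite E1 => /eqP; rewrite eq_sym (sc_pr_neq hz).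
have Hhd : forall a q', q <> Let a :: q'.
  move=> a q' Eq; move: Eh1 Eh2; rewrite Eq !subst_cons /= => [[E1 _]] [E2].
  by move=> _; move: (pr_neq hz a1); rewrite -E1 -E2 eqxx.
have Hend : forall q' b, q <> rcons q' (Let b).
  move=> q' b Eq; move: Eh1 Eh2; rewrite Eq !subst_rcons /= => E1 E2.
  have L1 := congr1 (last a1) E1; have L2 := congr1 (last a1) E2.
  rewrite last_cat /= in L1 L2.
  rewrite ?last_cat /= ?(bchain_last hz) in L1 L2.
  have H : sc am = am by rewrite -L1 L2.
  by move: (sc_neq hz am); rewrite H eqxx.
have Hq0 : q != [::] by apply/eqP.
have Hfs := fs_sup Hq0 Hr Hadj Hend.
have Hinq : forall w, subseq (lets q) w -> inL q w.
  by move=> w Hw; case: (Hfs w Hw) => [a q' E|h Eh]; [case: (Hhd a q' E)| exists h].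
set c := lets q.
have Hc1 : subseq c P1 by rewrite -Eh1; apply: lets_sub.
have Hc2 : subseq c P2 by rewrite -Eh2; apply: lets_sub.
case: (boolP (subseq u c)) => Huc; last first.
  have := NL_sup Hu0 (size_subseq Hc1) Huc => H.
  by have := HN (Hinq _ H).
case: (boolP (c == u)) => Ecu.
  move=> w; split => [[h Eh]|Hp].
    apply: Hsup; apply: subseq_trans Huc _; rewrite -Eh; exact: lets_sub.
  apply: Hinq; rewrite -/c (eqP Ecu); case: Hp => h Eh; rewrite -Eh -Hlp; exact: lets_sub.
have Hlt : size u < size c.
  by rewrite (ltn_leqif (size_subseq_leqif Huc)) eq_sym.
have [u1 [u2 [e [E He]]]] := ext_lemma Huc Hlt.
by case: (gain_contra E (subseq_trans He Hc1) (subseq_trans He Hc2)).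
Qed.

End CaseA.

Lemma avoid2 (T : finType) : 2 < #|T| -> forall x y : T, exists c : T, (c != x) && (c != y).
Proof.
move=> H x y; case: (pickP (fun c => (c != x) && (c != y))) => [c Hc|H0]; first by exists c.
have : #|T| <= 2.
  apply: leq_trans (card_size [:: x; y]).
  apply: subset_leq_card; apply/subsetP => c _; have := H0 c; rewrite !inE.
  by case: eqP => //= _; case: eqP.
lia.
Qed.

Lemma caseA0_teach (S : eqType) (X1 : seq nat) :
  let p := block_pattern X1 ([::] : seq (S * seq nat)) in
  has (fun y => count (pred1 (Var y)) p == 1) X1 ->
  teaching_set (@reg_class S) p [:: ([::], true)].
Proof.
move=> p HX1.
have Hsup : forall w, inL p w.
  by move=> w; apply: caseA_sup => //; rewrite sub0seq.
split.
  by move=> e; rewrite inE => /eqP -> /=; split.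
move=> q [Hq Hr] Hcons.
have [_ /(_ erefl) [h Eh]] := Hcons ([::], true) (mem_head _ _).
have Hl : lets q = [::] by apply/eqP; rewrite -subseq0; move: (lets_sub h q); rewrite Eh.
have Hadj : forall q1 q2 a b, q <> q1 ++ Let a :: Let b :: q2.
  by move=> q1 q2 a b Eq; move: Hl; rewrite Eq lets_cat lets_cons_let; case: (lets q1).
have Hhd : forall a q', q <> Let a :: q'.
  by move=> a q' Eq; move: Hl; rewrite Eq lets_cons_let.
have Hend : forall q' b, q <> rcons q' (Let b).
  by move=> q' b Eq; move: Hl; rewrite Eq -cats1 lets_cat lets_cons_let; case: (lets q').
have Hq0 : q != [::] by apply/eqP.
have Hfs := fs_sup Hq0 Hr Hadj Hend.
move=> w; split => _ //.
case: (Hfs w) => [|a q' E|h' Eh']; first by rewrite Hl sub0seq.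
  by case: (Hhd a q' E).
by exists h'.
Qed.

Theorem mainTheorem5 (Sigma : finType) (hz : 3 <= #|Sigma|) (p : pattern Sigma) :
  simple_block_regular p -> TD_le (@reg_class Sigma) p 3.
Proof.
move=> [X1 [rest [Ep [Hne _]]]]; subst p.
have hz' : 2 < #|Sigma| by [].
have HX1 : X1 != [::] by exact: (Hne 0 isT).
have Hall : all (fun aX => aX.2 != [::]) rest.
  apply/allP => aX HaX.
  have Hi : (index aX rest).+1 < size (X1 :: map snd rest) by rewrite /= size_map ltnS index_mem.
  have := Hne _ Hi; rewrite /= (nth_map aX) ?index_mem // nth_index //.
set keep := fun y => count (pred1 (Var y)) (block_pattern X1 rest) == 1.
case: (boolP (has keep X1 && all (fun aX => has keep aX.2) rest)) => HA.
- case/andP: HA => HA1 HA2.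
  case Eu: (map fst rest) => [|a1 u'].
    have Er : rest = [::] by apply/nilP; rewrite /nilp -(size_map fst) Eu.
    exists [:: ([::], true)]; split => //.
    rewrite Er; apply: caseA0_teach; move: HA1; rewrite /keep Er //.
  eexists; split; last first.
    by apply: (caseA_teach hz' Eu).
  by [].
- have [l [Hl Hbad]] : exists l, l <= size rest /\
      (forall y, y \in nth [::] (X1 :: map snd rest) l -> count (pred1 (Var y)) (block_pattern X1 rest) != 1).
    case: (boolP (has keep X1)) => H1.
      rewrite H1 /= in HA; have [aX HaX HaX2] := allPn HA.
      exists (index aX rest).+1; split; first by rewrite index_mem.
      rewrite /= (nth_map aX) ?index_mem // nth_index // => y Hy.
      by apply/negP => Hk; move/negP: HaX2; apply; apply/hasP; exists y.
    exists 0; split => // y Hy.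
    by apply/negP => Hk; move/negP: H1; apply; apply/hasP; exists y.
  have [d0 _] : exists d0 : Sigma, true by move: hz' => /ltnW/ltnW/card_gt0P [d0 _]; exists d0.
  set u := map fst rest.
  have [c /andP [Hc1 Hc2]] := avoid2 hz' (nth d0 u l.-1) (nth d0 u l).
  eexists; split; last first.
    by apply: (caseB_teach HX1 Hall Hl Hbad Hc1 Hc2).
  by [].
Qed.
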